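(* Let $\varphi=\frac{1+\sqrt5}{2}$, $F_n=\frac{\varphi^n-(-1/\varphi)^n}{\varphi+1/\varphi}$, $F_0!=1$, $F_n!=F_1\cdots F_n$. For commuting variables $x,y$ and $n\ge1$ define the Golden binomial $$(x+y)_F^n=\prod_{k=0}^{n-1}\big(x+(-1)^k\varphi^{\,n-1-2k}y\big)=(x+\varphi^{n-1}y)(x-\varphi^{n-3}y)\cdots(x+(-1)^{n-1}\varphi^{-n+1}y),$$ and $(x+y)_F^0=1$. Then for every $n\ge0$, $$(x+y)_F^n=\sum_{k=0}^n\frac{F_n!}{F_{n-k}!\,F_k!}(-1)^{\frac{k(k-1)}2}x^{n-k}y^k.$$ *)

(* Defs.v *)
From HB Require Import structures.
From mathcomp Require Import all_boot all_order all_algebra.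
Set Implicit Arguments. Unset Strict Implicit. Unset Printing Implicit Defensive.
Import Order.TTheory GRing.Theory Num.Theory.
Local Open Scope ring_scope.

Definition phi (R : rcfType) : R := (1 + Num.sqrt 5) / 2.

Definition fibB (R : rcfType) (n : nat) : R :=
  (phi R ^+ n - (- (phi R)^-1) ^+ n) / (phi R + (phi R)^-1).

Definition fibfact (R : rcfType) (n : nat) : R :=
  \prod_(1 <= i < n.+1) fibB R i.

Definition golden_binom (R : rcfType) (A : comAlgType R) (x y : A) (n : nat) : A :=
  \prod_(k < n) (x + ((-1) ^+ k * phi R ^ ((n%:Z - 1 - 2 * k%:Z)%R)) *: y).

(* Main.v *)
Require Import Defs.
From HB Require Import structures.
From mathcomp Require Import all_boot all_order all_algebra.
From mathcomp Require Import ring lra.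
Import Order.TTheory GRing.Theory Num.Theory.
Local Open Scope ring_scope.

Section S.
Variable R : rcfType.
Local Notation p := (phi R).
Local Notation q := (- (phi R)^-1).

Lemma phi_gt1 : 1 < p.
Proof.
rewrite /phi ltr_pdivlMr // mul1r.
have h : 1 < Num.sqrt (5:R).
  by rewrite -[X in X < _]sqrtr1 ltr_sqrt ?ltr0n // ltr1n.
lra.
Qed.

Lemma phi_neq0 : p != 0.
Proof. by have := phi_gt1; rewrite lt_neqAle => /andP[] _ h; apply/lt0r_neq0/(lt_le_trans ltr01). Qed.

Lemma s_neq0 : p + p^-1 != 0.
Proof.
have h := phi_gt1. have h0 : 0 < p by lra.
apply/lt0r_neq0; rewrite ltr_wpDr // ?invr_ge0; lra.
Qed.

Lemma pq : p * q = -1.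
Proof. by rewrite mulrN divff // phi_neq0. Qed.

Lemma fibD a b : fibB R (a + b) = p ^+ a * fibB R b + q ^+ b * fibB R a.
Proof. rewrite /fibB !exprD; ring. Qed.

Lemma fib_neq0 i : (0 < i)%N -> fibB R i != 0.
Proof.
move=> hi; rewrite /fibB mulf_neq0 ?invr_eq0 ?s_neq0 // subr_eq0.
apply/negP => /eqP /(congr1 (fun z => `|z|)).
rewrite !normrX normrN normfV !ger0_norm; last by have := phi_gt1; lra.
move=> e.
have h1 : 1 < p ^+ i by rewrite exprn_egt1 // -?lt0n ?phi_gt1.
have h2 : (p^-1) ^+ i < 1.
  rewrite exprn_ilt1 //; first by rewrite -?lt0n.
  by rewrite invr_ge0; have := phi_gt1; lra.
  by rewrite invf_lt1; have := phi_gt1; lra.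
lra.
Qed.

Lemma fibfactS n : fibfact R n.+1 = fibfact R n * fibB R n.+1.
Proof. by rewrite /fibfact big_nat_recr. Qed.

Lemma fibfact0 : fibfact R 0 = 1.
Proof. by rewrite /fibfact big_geq. Qed.

Lemma fibfact_neq0 n : fibfact R n != 0.
Proof.
elim: n => [|n IH]; first by rewrite fibfact0 oner_neq0.
by rewrite fibfactS mulf_neq0 // fib_neq0.
Qed.

Definition G n k := fibfact R n / (fibfact R (n - k) * fibfact R k).

Lemma G0 n : G n 0 = 1.
Proof. by rewrite /G subn0 fibfact0 mulr1 divff // fibfact_neq0. Qed.

Lemma Gnn n : G n n = 1.
Proof. by rewrite /G subnn fibfact0 mul1r divff // fibfact_neq0. Qed.

Lemma Grec j m :
  G (j + m.+1).+1 j.+1 = p ^+ j.+1 * G (j + m.+1) j.+1 + q ^+ m.+1 * G (j + m.+1) j.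
Proof.
rewrite /G.
have -> : ((j + m.+1).+1 - j.+1 = m.+1)%N by rewrite subSS addnC addnK.
have -> : ((j + m.+1) - j.+1 = m)%N by rewrite addnS subSS addnC addnK.
have -> : ((j + m.+1) - j = m.+1)%N by rewrite addnC addnK.
rewrite fibfactS (fibfactS m) (fibfactS j).
have -> : (j + m.+1).+1 = (j.+1 + m.+1)%N by rewrite addSn.
rewrite fibD.
have h1 := fibfact_neq0 m. have h2 := fibfact_neq0 j.
have h3 := fibfact_neq0 (j + m.+1).
have h4 : fibB R m.+1 != 0 by rewrite fib_neq0.
have h5 : fibB R j.+1 != 0 by rewrite fib_neq0.
field.
by rewrite h1 h2 h4 h5.
Qed.

Definition C n k := if (k <= n)%N then G n k * (-1) ^+ 'C(k, 2) else 0.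

Lemma binS2 k : 'C(k.+1, 2) = ('C(k, 2) + k)%N.
Proof. by rewrite binS bin1. Qed.

Lemma qp_pow j : q ^+ j * p ^+ j = (-1) ^+ j.
Proof. by rewrite -exprMn mulrC pq. Qed.

Lemma Crec n j : (j <= n)%N ->
  C n.+1 j.+1 = p ^+ j.+1 * C n j.+1 + q ^+ n * p ^+ j * C n j.
Proof.
move=> hj; rewrite /C ltnS hj.
rewrite leq_eqVlt in hj; case/orP: hj => [/eqP ->|hj].
  rewrite ltnn mulr0 add0r !Gnn binS2 exprD qp_pow; ring.
rewrite hj.
have [m ->] : exists m, n = (j + m.+1)%N.
  by exists (n - j.+1)%N; rewrite addnS -addSn subnKC.
rewrite Grec binS2 exprD exprD.
have := qp_pow j; rewrite -/q => e.
rewrite -e; ring.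
Qed.

Variable A : comAlgType R.
Variable x : A.

Lemma gb_step (y : A) n :
  golden_binom x y n.+1 = golden_binom x (p *: y) n * (x + q ^+ n *: y).
Proof.
rewrite /golden_binom big_ord_recr /=; congr (_ * (x + _)).
  apply: eq_bigr => k _; congr (x + _); rewrite scalerA -mulrA; congr (_ *: _).
  have -> : (n.+1%:Z - 1 - 2 * k%:Z = (n%:Z - 1 - 2 * k%:Z) + 1)%R.
    by rewrite -addn1 PoszD; ring.
  by rewrite expfzDr ?phi_neq0 // expr1z.
congr (_ *: _).
have -> : (n.+1%:Z - 1 - 2 * n%:Z = - n%:Z)%R by rewrite -addn1 PoszD; ring.
rewrite -exprnN -mulN1r exprMn.
by rewrite expr1n mulr1 -exprVn -exprMn mulN1r.
Qed.

Lemma C0 n : C n 0 = 1.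
Proof. by rewrite /C leq0n G0 bin0n expr0 mulr1. Qed.

Lemma Cout n : C n n.+1 = 0.
Proof. by rewrite /C ltnn. Qed.

Lemma main_gen n : forall y : A, golden_binom x y n =
  \sum_(k < n.+1) C n k *: (x ^+ (n - k) * y ^+ k).
Proof.
elim: n => [|n IH] y.
  by rewrite /golden_binom big_ord0 big_ord1 /= C0 scale1r mulr1.
rewrite gb_step IH big_distrl /=.
transitivity (\sum_(k < n.+1) (C n k * p ^+ k) *: (x ^+ (n - k).+1 * y ^+ k)
  + \sum_(k < n.+1) (q ^+ n * p ^+ k * C n k) *: (x ^+ (n - k) * y ^+ k.+1)).
  rewrite -big_split; apply: eq_bigr => k _ /=.
  rewrite exprZn -scalerAr mulrDr -!scalerAl -!scalerAr !scalerA.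
  by congr (_ + _); congr (_ *: _); rewrite ?exprS; ring.
rewrite [in RHS]big_ord_recl /=.
under [in RHS]eq_bigr => i _ do rewrite /= /bump /= add1n (@Crec n i (ltn_ord i)) subSS scalerDl.
rewrite big_split /= addrA; congr (_ + _).
rewrite big_ord_recl big_ord_recr /= Cout mulr0 scale0r addr0 !C0; congr (_ + _).
  by rewrite expr0 mulr1 subn0.
apply: eq_bigr => i _; rewrite /bump /= add1n subnSK //; congr (_ *: _); ring.
Qed.
End S.

Theorem mainTheorem10 (R : rcfType) (A : comAlgType R) (x y : A) (n : nat) :
  golden_binom x y n =
  \sum_(k < n.+1)
     ((fibfact R n / (fibfact R (n - k) * fibfact R k))
        * (-1) ^+ ('C(k, 2))) *: (x ^+ (n - k) * y ^+ k).
Proof.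
rewrite main_gen; apply: eq_bigr => k _.
by rewrite /C -ltnS ltn_ord.
Qed.
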